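(* Let $(D,V)$ be an admissible pair, $E,\alpha$ as below, and $\beta\in\mathbb{R}$ with $|\beta+\alpha|\le\tau(E)$. Then $V_\beta C^\infty(D)$ is a closed subspace of $C^\infty(D)$, and every $\varphi\in(V_\beta C^\infty(D))^\perp$ satisfies $(\mathcal{W}\varphi)(z)=ce^{i\beta z}$ for all $z\in\mathbb{C}$, for some constant $c\in\mathbb{C}$.
   Context: Let $H$ be a separable complex Hilbert space. A pair $(D,V)$ of operators is called admissible if: (i) $D:\mathscr{D}(D)\subset H\to H$ is a densely defined closed linear operator; (ii) $\dim\ker D=1$; (iii) $D$ has a self-adjoint restriction with compact resolvent; (iv) $V:H\to H$ is a compact operator with $\sigma(V)=\{0\}$; (v) $\operatorname{Ran}V\subset\mathscr{D}(D)$ and $DV=I$. Fix $0\neq\phi_0\in\ker D$ and put $\phi_\lambda=(I-\lambda V)^{-1}\phi_0$ for $\lambda\in\mathbb{C}$. The generalized Fourier transform is $(\mathcal{W}x)(\lambda)=\langle x,\phi_{\bar\lambda}\rangle_H$; $\mathcal{W}H$ is a Hilbert space of entire functions with norm $\|\mathcal{W}x\|:=\|x\|_H$. A Hermite–Biehler (HB) function is an entire $E$ with $|E(z)|>|E(\bar z)|$ for $z\in\mathbb{C}_+$; $\mathcal{H}(E)$ is the space of entire $f$ with $f/E,f^\#/E\in H^2(\mathbb{C}_+)$ ($f^\#(z)=\overline{f(\bar z)}$), normed by $\|f/E\|_{L^2(\mathbb{R})}$; $E$ is regular if $1/((z+i)E)\in H^2(\mathbb{C}_+)$; $\tau(f)=\limsup_{|z|\to\infty}\log|f(z)|/|z|$.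 It is known that there exist a regular HB function $E$ with no real zeros and $\alpha\in\mathbb{R}$ such that $f\mapsto e^{i\alpha z}f$ is a unitary map of $\mathcal{W}H$ onto $\mathcal{H}(E)$; fix such $E$ and $\alpha$. For $\beta\in\mathbb{R}$ with $|\beta+\alpha|\le\tau(E)$, the function $(1-e^{i\beta z})/z$ lies in $\mathcal{W}H$; set $x_\beta=\mathcal{W}^{-1}\big((1-e^{i\beta z})/z\big)$ and $V_\beta u=Vu+\langle u,x_\beta\rangle\phi_0$ for $u\in H$. Let $\mathscr{D}(D^1)=\mathscr{D}(D)$, $\mathscr{D}(D^n)=\{x\in\mathscr{D}(D^{n-1}):D^{n-1}x\in\mathscr{D}(D)\}$, and $C^\infty(D)=\bigcap_{n\ge1}\mathscr{D}(D^n)$, a Fréchet space with the metric $d(x,y)=\sum_{j\ge0}2^{-j}\frac{\|D^jx-D^jy\|_H}{1+\|D^jx-D^jy\|_H}$; $D$ and $V_\beta$ act continuously on it. For $\varphi\in(C^\infty(D))'$ set $(\mathcal{W}\varphi)(z)=\overline{\varphi(\phi_{\bar z})}$; $\mathcal{M}^\perp$ denotes the set of continuous functionals vanishing on $\mathcal{M}$. *)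

(* Defs.v *)
From HB Require Import structures.
From mathcomp Require Import all_boot all_order all_algebra.
From mathcomp Require Import complex.
From mathcomp Require Import all_classical all_reals all_analysis.
Import numFieldNormedType.Exports.
Import Order.TTheory GRing.Theory Num.Theory.

Set Implicit Arguments.
Unset Strict Implicit.
Unset Printing Implicit Defensive.

Local Open Scope classical_set_scope.
Local Open Scope ring_scope.
Local Open Scope complex_scope.

Section Defs.
Variable R : realType.
Local Notation C := R[i].

Definition ci : C := 0 +i* 1.

Definition cabs (z : C) : R := Num.sqrt (complex.Re z ^+ 2 + complex.Im z ^+ 2).

Definition cexp (z : C) : C :=
  (expR (complex.Re z))%:C * (cos (complex.Im z) +i* sin (complex.Im z)).

Definition cdiff (f : C -> C) (z : C) : Prop :=
  derivable (f : C^o -> C^o) z 1.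

Definition entire (f : C -> C) : Prop := forall z, cdiff f z.

Definition UHP : set C := [set z | 0 < complex.Im z].

Definition L2sq (g : R -> C) : \bar R :=
  (\int[@lebesgue_measure R]_(x in [set: R]) ((cabs (g x)) ^+ 2)%:E)%E.

Definition H2_UHP (f : C -> C) : Prop :=
  (forall z, UHP z -> cdiff f z) /\
  exists M : R, forall y : R, 0 < y -> (L2sq (fun x => f (x +i* y)) <= M%:E)%E.

Definition fsharp (f : C -> C) : C -> C := fun z => (f z^*)^*.

Definition HB (E : C -> C) : Prop :=
  entire E /\ forall z, UHP z -> cabs (E z^*) < cabs (E z).

Definition in_HE (E : C -> C) (f : C -> C) : Prop :=
  entire f /\ H2_UHP (fun z => f z / E z) /\ H2_UHP (fun z => fsharp f z / E z).

Definition normHE2 (E : C -> C) (f : C -> C) : \bar R :=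
  L2sq (fun x : R => f x%:C / E x%:C).

Definition regularHB (E : C -> C) : Prop :=
  H2_UHP (fun z => 1 / ((z + ci) * E z)).

Definition loggrowth (f : C -> C) (z : C) : \bar R :=
  if f z == 0 then (-oo)%E else (ln (cabs (f z)) / cabs z)%:E.

(* tau(f) = limsup_{|z| -> oo} log|f(z)|/|z| = inf_r sup_{|z|>r} ... *)
Definition tau (f : C -> C) : \bar R :=
  ereal_inf [set ereal_sup [set loggrowth f z | z in [set z | r < cabs z]]
            | r in [set: R]].

Variable H : completeNormedModType C.

Definition hnorm (x : H) : R := complex.Re `|x|.

(* ip is an inner product (linear in the first, conjugate-linear in the
   second argument) inducing the norm of H; H complete and separable. *)
Definition hilbert_space (ip : H -> H -> C) : Prop :=
  (forall a x y z, ip (a *: x + y) z = a * ip x z + ip y z) /\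
  (forall x y, ip y x = (ip x y)^*) /\
  (forall x, ip x x = `|x| ^+ 2) /\
  (exists s : nat -> H, dense (range s)).

Definition lin_subspace (S : set H) : Prop :=
  S 0 /\ forall a x y, S x -> S y -> S (a *: x + y).

Definition linear_on (S : set H) (T : H -> H) : Prop :=
  forall a x y, S x -> S y -> T (a *: x + y) = a *: T x + T y.

Definition bounded_op (T : H -> H) : Prop :=
  linear_on setT T /\ continuous T.

Definition compact_op (T : H -> H) : Prop :=
  linear_on setT T /\ compact (closure (T @` [set x | hnorm x <= 1])).

Definition spectrum (T : H -> H) : set C :=
  [set l | ~ exists S : H -> H, bounded_op S /\
             (forall x, T (S x) - l *: S x = x) /\
             (forall x, S (T x - l *: x) = x)].

(* the operator D with domain domD (values of D outside domD are irrelevant)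
   is a densely defined closed linear operator *)
Definition dd_closed_op (D : H -> H) (domD : set H) : Prop :=
  lin_subspace domD /\ linear_on domD D /\ dense domD /\
  closed [set p : H * H | domD p.1 /\ D p.1 = p.2].

Definition kerD (D : H -> H) (domD : set H) : set H :=
  [set x | domD x /\ D x = 0].

Definition dim_ker_1 (D : H -> H) (domD : set H) : Prop :=
  exists f, kerD D domD f /\ f <> 0 /\
    forall g, kerD D domD g -> exists a : C, g = a *: f.

Definition sa_restr_compact_resolvent (ip : H -> H -> C)
    (D : H -> H) (domD : set H) : Prop :=
  exists dom0 : set H,
    dom0 `<=` domD /\ lin_subspace dom0 /\ dense dom0 /\
    (* D(A^* ) = D(A) *)
    (forall y, dom0 y <-> exists z, forall x, dom0 x -> ip (D x) y = ip x z) /\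
    (* A^* = A on D(A) *)
    (forall x y, dom0 x -> dom0 y -> ip (D x) y = ip x (D y)) /\
    (exists (l : C) (Rl : H -> H), compact_op Rl /\
       (forall y, dom0 (Rl y) /\ D (Rl y) - l *: Rl y = y) /\
       (forall x, dom0 x -> Rl (D x - l *: x) = x)).

Definition admissible (ip : H -> H -> C) (D : H -> H) (domD : set H)
    (V : H -> H) : Prop :=
  dd_closed_op D domD /\
  dim_ker_1 D domD /\
  sa_restr_compact_resolvent ip D domD /\
  compact_op V /\ (forall l, spectrum V l <-> l = 0) /\
  (forall u, domD (V u) /\ D (V u) = u).

(* generalized Fourier transform (W x)(l) = <x, phi_{conj l}> *)
Definition gfourier (ip : H -> H -> C) (phi : C -> H) (x : H) : C -> C :=
  fun l => ip x (phi l^*).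

Fixpoint domDn (D : H -> H) (domD : set H) (n : nat) : set H :=
  match n with
  | 0 => setT
  | n'.+1 => [set x | domDn D domD n' x /\ domD (iter n' D x)]
  end.

Definition Cinf (D : H -> H) (domD : set H) : set H :=
  [set x | forall n, domDn D domD n x].

Definition dinf (D : H -> H) (x y : H) : R :=
  \big[+%R/0%R]_(0 <= j <oo)
    ((2 ^- j) * (hnorm (iter j D x - iter j D y)
                 / (1 + hnorm (iter j D x - iter j D y)))).

(* continuous linear functional on C^oo(D) (values outside C^oo(D) irrelevant) *)
Definition cont_functional (D : H -> H) (domD : set H) (f : H -> C) : Prop :=
  (forall a x y, Cinf D domD x -> Cinf D domD y -> f (a *: x + y) = a * f x + f y) /\
  (forall x, Cinf D domD x -> forall e : R, 0 < e -> exists2 d : R, 0 < d &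
     forall y, Cinf D domD y -> dinf D x y < d -> cabs (f x - f y) < e).

End Defs.
Arguments ci {R}.

(* Main.v *)
Require Import Defs.
From HB Require Import structures.
From mathcomp Require Import all_boot all_order all_algebra.
From mathcomp Require Import complex.
From mathcomp Require Import all_classical all_reals all_analysis.
From mathcomp Require Import ring lra.
Import numFieldNormedType.Exports.
Import Order.TTheory GRing.Theory Num.Theory.
Local Open Scope classical_set_scope.
Local Open Scope ring_scope.
Local Open Scope complex_scope.
Set Implicit Arguments. Unset Strict Implicit. Unset Printing Implicit Defensive.
Section Aux.
Variable R : realType.
Variable H : completeNormedModType R[i].
Variable D : H -> H.
Variable domD : set H.
Hypothesis subD : lin_subspace domD.
Hypothesis linD : linear_on domD D.

Lemma lin0 (S : set H) (T : H -> H) : S 0 -> linear_on S T -> T 0 = 0.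
Proof.
move=> S0 lT; have := @lT 1 0 0 S0 S0; rewrite !scale1r addr0 => e.
by apply: (addrI (T 0)); rewrite addr0 -e.
Qed.

Lemma domD0 : domD 0. Proof. by case: subD. Qed.
Lemma D0 : D 0 = 0. Proof. exact: lin0 domD0 linD. Qed.

Lemma domDZ a x : domD x -> domD (a *: x).
Proof. by move=> dx; have := subD.2 a x 0 dx domD0; rewrite addr0. Qed.
Lemma domDL a x y : domD x -> domD y -> domD (a *: x + y).
Proof. by move=> dx dy; apply: subD.2. Qed.
Lemma DZ a x : domD x -> D (a *: x) = a *: D x.
Proof. by move=> dx; have := @linD a x 0 dx domD0; rewrite !addr0 D0 addr0. Qed.
Lemma DB x y : domD x -> domD y -> D (x - y) = D x - D y.
Proof.
move=> dx dy; have := @linD (-1) y x dy dx; rewrite !scaleN1r => e.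
by rewrite [x - y]addrC e addrC.
Qed.

Lemma domDnP n x : domDn D domD n x <-> forall k, (k < n)%N -> domD (iter k D x).
Proof.
elim: n => [|n IH] /=; first by split.
split.
  move=> [/IH h1 h2] k; rewrite ltnS leq_eqVlt => /orP[/eqP->//|]; exact: h1.
by move=> h; split; [apply/IH => k kn; apply: h; exact: ltnW| apply: h].
Qed.

Lemma CinfP x : Cinf D domD x <-> forall k, domD (iter k D x).
Proof.
split => [h k|h n]; first by have /domDnP := h k.+1; apply.
by apply/domDnP => k _; apply: h.
Qed.

Lemma Cinf_dom x : Cinf D domD x -> domD x.
Proof. by move=> /CinfP /(_ 0%N). Qed.

Lemma Cinf_D x : Cinf D domD x -> Cinf D domD (D x).
Proof. by move=> /CinfP h; apply/CinfP => k; rewrite -iterSr. Qed.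

Lemma iterL a x y : Cinf D domD x -> Cinf D domD y -> forall k,
  iter k D (a *: x + y) = a *: iter k D x + iter k D y.
Proof.
move=> /CinfP hx /CinfP hy; elim=> [//|k IH].
by rewrite !iterS IH linD.
Qed.

Lemma CinfL a x y : Cinf D domD x -> Cinf D domD y -> Cinf D domD (a *: x + y).
Proof.
move=> hx hy; apply/CinfP => k; rewrite iterL //.
by apply: domDL; [move/CinfP: hx|move/CinfP: hy].
Qed.

Lemma Cinf0 : Cinf D domD 0.
Proof.
apply/CinfP => k; suff -> : iter k D 0 = 0 by exact: domD0.
by elim: k => [//|k IH]; rewrite iterS IH D0.
Qed.

Lemma CinfZ a x : Cinf D domD x -> Cinf D domD (a *: x).
Proof. by move=> hx; have := CinfL a hx Cinf0; rewrite addr0. Qed.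

End Aux.
Lemma conjE (R : realType) (x : R[i]) : Num.conj x = conjc x.
Proof. by []. Qed.

Section IP.
Variable R : realType.
Variable H : completeNormedModType R[i].
Variable ip : H -> H -> R[i].
Hypothesis hip : hilbert_space ip.

Lemma ip0l z : ip 0 z = 0.
Proof.
have := hip.1 1 0 0 z; rewrite scale1r addr0 mul1r => e.
by apply: (addrI (ip 0 z)); rewrite addr0 -e.
Qed.
Lemma ipD x y z : ip (x + y) z = ip x z + ip y z.
Proof. by have := hip.1 1 x y z; rewrite scale1r mul1r. Qed.
Lemma ipZ a x z : ip (a *: x) z = a * ip x z.
Proof. by have := hip.1 a x 0 z; rewrite addr0 ip0l addr0. Qed.
Lemma ipN x z : ip (- x) z = - ip x z.
Proof. by rewrite -scaleN1r ipZ mulN1r. Qed.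
Lemma ipB x y z : ip (x - y) z = ip x z - ip y z.
Proof. by rewrite ipD ipN. Qed.
Lemma ipC x y : ip y x = (ip x y)^*.
Proof. exact: hip.2.1. Qed.
Lemma ipxx x : ip x x = `|x| ^+ 2.
Proof. exact: hip.2.2.1. Qed.
Lemma ipDr x y z : ip x (y + z) = ip x y + ip x z.
Proof. by rewrite ipC ipD rmorphD (ipC y x) (ipC z x). Qed.
Lemma ipZr a x z : ip x (a *: z) = a^* * ip x z.
Proof. by rewrite ipC ipZ rmorphM (ipC z x). Qed.
Lemma ipNr x z : ip x (- z) = - ip x z.
Proof. by rewrite ipC ipN rmorphN (ipC z x). Qed.
Lemma ipBr x y z : ip x (y - z) = ip x y - ip x z.
Proof. by rewrite ipDr ipNr. Qed.
Lemma ip0r x : ip x 0 = 0.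
Proof. by rewrite ipC ip0l conjc0. Qed.

Lemma CS v y : `|ip v y| <= `|v| * `|y|.
Proof.
have [->|y0] := eqVneq y 0; first by rewrite ip0r normr0 normr0 mulr0.
set a := ip v y; set b := ip y y.
have bb : b^* = b by rewrite /b -ipC.
have b0 : 0 < b by rewrite /b ipxx exprn_gt0 // normr_gt0.
pose u := b *: v - a *: y.
have e1 : ip v u = b * `|v| ^+ 2 - a^* * a.
  by rewrite /u ipBr !ipZr !conjE bb ipxx.
have e2 : ip y u = 0.
  by rewrite /u ipBr !ipZr !conjE bb -/b (ipC v y) -/a mulrC subrr.
have e3 : ip u u = b * (b * `|v| ^+ 2 - `|a| ^+ 2).
  by rewrite {1}/u ipB !ipZ e1 e2 sqr_normc !conjE mulr0 subr0 [a * _]mulrC.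
have h : 0 <= b * `|v| ^+ 2 - `|a| ^+ 2.
  by rewrite -(pmulr_rge0 _ b0) -e3 ipxx exprn_ge0.
have : `|a| ^+ 2 <= (`|v| * `|y|) ^+ 2.
  by rewrite exprMn -(ipxx y) -/b mulrC -subr_ge0.
by rewrite ler_pXn2r // nnegrE // mulr_ge0.
Qed.
End IP.
Section Bnd.
Variable R : realType.
Variable H : completeNormedModType R[i].

Lemma natC (n : nat) : (n%:R : R[i]) = (n%:R : R)%:C.
Proof. by rewrite rmorph_nat. Qed.

Lemma normHC (x : H) : `|x| = (hnorm x)%:C.
Proof. by rewrite /hnorm RRe_real // ger0_real. Qed.

Lemma hnorm_ge0 (x : H) : 0 <= hnorm x.
Proof. by have := normr_ge0 x; rewrite normHC lecE => /andP[_]. Qed.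

Lemma compact_bnd (A : set H) : compact A -> exists M : nat, forall q, A q -> `|q| <= M%:R.
Proof.
rewrite compact_cover => Aco.
have covA : A `<=` \bigcup_(n : nat) [set p : H | `|p| < n%:R].
  move=> p _; exists (Num.truncn (hnorm p)).+1 => //=.
  by rewrite normHC natC ltcR truncnS_gt.
have /Aco [] := covA.
  move=> n _; rewrite openE => p; rewrite /= -subr_gt0 => ltpn.
  apply/nbhs_ballP; exists (n%:R - `|p|) => // q.
  rewrite -ball_normE /= ltrBrDr distrC; apply: le_lt_trans.
  by rewrite -{1}(subrK p q) ler_normD.
move=> F _ FcovA.
exists (\max_(i <- finmap.enum_fset F) i)%N => q /FcovA [n Fn] /= /ltW qn.
apply: (le_trans qn); rewrite ler_nat.
by apply: leq_bigmax_seq => //; have : n \in finmap.enum_fset F by [].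
Qed.
End Bnd.
Section VB.
Variable R : realType.
Variable H : completeNormedModType R[i].

Lemma Vbound (V : H -> H) : compact_op V ->
  exists M : R[i], 0 <= M /\ forall v, `|V v| <= M * `|v|.
Proof.
move=> [lV /compact_bnd [M hM]]; exists M%:R; split => // v.
have V0 : V 0 = 0 by apply: (@lin0 _ _ setT).
have [->|v0] := eqVneq v 0; first by rewrite V0 !normr0 mulr0.
have n0 : 0 < `|v| by rewrite normr_gt0.
set b := `|v|^-1 *: v.
have Vb : V b = `|v|^-1 *: V v.
  by have := @lV (`|v|^-1) v 0 I I; rewrite !addr0 V0 addr0.
have nb : `|b| = 1 by rewrite normrZ normfV normr_id mulVf // gt_eqF.
have : `|V b| <= M%:R.
  apply: hM; apply: subset_closure; exists b => //.
  by rewrite /= /hnorm nb.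
rewrite Vb normrZ normfV normr_id ler_pdivrMl // => h.
by rewrite mulrC.
Qed.
End VB.
Section Ser.
Variable R : realType.

Lemma series_ge (t : nat -> R) : (forall j, 0 <= t j <= 2^-j) ->
  forall j, t j <= limn (fun n => \big[+%R/0%R]_(0 <= i < n) t i).
Proof.
move=> ht j.
set S := fun n => \big[+%R/0%R]_(0 <= i < n) t i.
have Sinc : forall n, S n <= S n.+1.
  by move=> n; rewrite /S big_nat_recr //= lerDl; case/andP: (ht n).
have Sb : forall n, S n + 2 * 2^-n <= 2.
  elim=> [|n IH]; first by rewrite /S big_geq // expr0 invr1 mulr1 add0r.
  rewrite /S big_nat_recr //= -/(S n); apply: le_trans IH.
  have e : 2 * (2:R)^-n.+1 = 2^-n.
    by rewrite exprS invfM mulrA divff // ?mul1r // pnatr_eq0.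
  rewrite e -addrA lerD2l mulr2n.
  by case/andP: (ht n) => _ h; rewrite mulrDl !mul1r lerD2r.
have nd : nondecreasing_seq S by apply/nondecreasing_seqP.
have cS : cvgn S.
  apply: nondecreasing_is_cvgn => //; exists 2 => _ [n _ <-].
  by apply: le_trans (Sb n); rewrite lerDl mulr_ge0 // invr_ge0 exprn_ge0.
apply: limr_ge => //; near=> n.
have jn : (j < n)%N by near: n; exists j.+1.
apply: (le_trans _ (nd _ _ jn)).
rewrite /S big_nat_recr //= lerDr sumr_ge0 // => i _.
by case/andP: (ht i).
Unshelve. all: by end_near.
Qed.

Lemma frac_lt (h s : R) : 0 <= h -> s <= 1/2 -> h / (1 + h) < s -> h < 2 * s.
Proof.
move=> h0 s2; rewrite ltr_pdivrMr; last by rewrite ltr_pwDl.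
move=> hs; nra.
Qed.
End Ser.
Section Dinf.
Variable R : realType.
Variable H : completeNormedModType R[i].

Lemma dinf_term (D : H -> H) x y j :
  2^-j * (hnorm (iter j D x - iter j D y) / (1 + hnorm (iter j D x - iter j D y)))
  <= dinf D x y.
Proof.
rewrite /dinf; apply: (@series_ge _ (fun j => 2^-j * (hnorm (iter j D x - iter j D y) / (1 + hnorm (iter j D x - iter j D y))))) => i.
have h0 := @hnorm_ge0 _ _ (iter i D x - iter i D y).
have p : 0 < 1 + hnorm (iter i D x - iter i D y) by rewrite ltr_pwDl.
have q0 : 0 <= hnorm (iter i D x - iter i D y) / (1 + hnorm (iter i D x - iter i D y)).
  by rewrite divr_ge0 // ltW.
have q1 : hnorm (iter i D x - iter i D y) / (1 + hnorm (iter i D x - iter i D y)) <= 1.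
  by rewrite ler_pdivrMr // mul1r lerDr.
rewrite mulr_ge0 ?invr_ge0 ?exprn_ge0 //=.
by rewrite ler_piMr // invr_ge0 exprn_ge0.
Qed.

Lemma dinf_small (D : H -> H) x y e : 0 < e -> e <= 1/4 -> dinf D x y < e ->
  hnorm (x - y) < 4 * e /\ hnorm (D x - D y) < 4 * e.
Proof.
move=> e0 e4 de; split.
  have := le_lt_trans (dinf_term D x y 0) de; rewrite expr0 invr1 mul1r /= => h.
  have e2 : e <= 1/2 by lra.
  have := @frac_lt R _ _ (@hnorm_ge0 _ _ (x - y)) e2 h; lra.
have := le_lt_trans (dinf_term D x y 1) de; rewrite expr1 /= => h.
have h' : hnorm (D x - D y) / (1 + hnorm (D x - D y)) < 2 * e.
  move: h; set q := _ / _ => h.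
  by rewrite -ltr_pdivrMl // ?invrK // ?(mulrC 2) in h *; lra.
have e2 : 2 * e <= 1/2 by lra.
have := @frac_lt R _ _ (@hnorm_ge0 _ _ (D x - D y)) e2 h'; lra.
Qed.
End Dinf.
Lemma zid (G : zmodType) (x A B C E : G) : x - (C + E) = x - (A + B) - (C - A) - (E - B).
Proof.
rewrite -!addrA; congr (_ + _); rewrite !opprD !opprK.
by rewrite (addrC (-C) A) addrACA addKr (addrC (-E) B) addKr.
Qed.

Lemma small_zero (R : realType) (a k : R) : 0 <= k -> (forall e, 0 < e -> e <= 1/4 -> a <= k * e) -> a <= 0.
Proof.
move=> k0 h; rewrite leNgt; apply/negP => a0.
set e := a / (4 * (k + 1 + a)).
have d0 : 0 < 4 * (k + 1 + a) by lra.
have E : e * (4 * (k + 1 + a)) = a by rewrite /e mulfVK // gt_eqF.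
have e0 : 0 < e by rewrite /e divr_gt0.
have e4 : e <= 1/4 by nra.
have := h e e0 e4; nra.
Qed.

Lemma linB (R : realType) (H : completeNormedModType R[i]) (S : set H) (T : H -> H) x y :
  linear_on S T -> S x -> S y -> T (x - y) = T x - T y.
Proof.
move=> lT sx sy; have := @lT (-1) y x sy sx; rewrite !scaleN1r => e.
by rewrite [x - y]addrC e addrC.
Qed.

Lemma cexp0 (R : realType) : cexp (0 : R[i]) = 1.
Proof. by rewrite /cexp /= expR0 cos0 sin0 complexr0 rmorph1 mul1r. Qed.

Lemma conjcM2 (R : realType) (a b : R[i]) : conjc (a * b) = conjc a * conjc b.
Proof. by rewrite rmorphM. Qed.
Theorem lemma6p12 (R : realType) (H : completeNormedModType R[i])
    (ip : H -> H -> R[i]) (D : H -> H) (domD : set H) (V : H -> H)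
    (phi0 : H) (phi : R[i] -> H) (E : R[i] -> R[i]) (alpha beta : R)
    (xb : H) :
  hilbert_space ip ->
  admissible ip D domD V ->
  (* 0 <> phi0 in ker D *)
  kerD D domD phi0 -> phi0 <> 0 ->
  (* phi_l = (I - l V)^{-1} phi0 *)
  (forall l, phi l - l *: V (phi l) = phi0) ->
  (* E regular HB without real zeros, alpha real, f |-> e^{i alpha z} f
     unitary from W H onto H(E) *)
  HB E -> regularHB E -> (forall x : R, E x%:C <> 0) ->
  (forall x, in_HE E (fun z => cexp (ci * alpha%:C * z) * gfourier ip phi x z)
             /\ normHE2 E (fun z => cexp (ci * alpha%:C * z) * gfourier ip phi x z)
                = ((hnorm x) ^+ 2)%:E) ->
  (forall f, in_HE E f -> exists x,
       forall z, f z = cexp (ci * alpha%:C * z) * gfourier ip phi x z) ->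
  (* |beta + alpha| <= tau(E) *)
  (`|beta + alpha|%:E <= tau E)%E ->
  (* x_beta = W^{-1}((1 - e^{i beta z})/z) *)
  (forall z, gfourier ip phi xb z =
     if z == 0 then - (ci * beta%:C) else (1 - cexp (ci * beta%:C * z)) / z) ->
  let Vb := fun u => V u + ip u xb *: phi0 in
  (* V_beta C^oo(D) is a closed lin_subspace of C^oo(D) *)
  ((forall u, Cinf D domD u -> Cinf D domD (Vb u)) /\
   lin_subspace [set Vb u | u in Cinf D domD] /\
   (forall x, Cinf D domD x ->
      (forall e : R, 0 < e -> exists u, Cinf D domD u /\ dinf D x (Vb u) < e) ->
      exists u, Cinf D domD u /\ x = Vb u)) /\
  (* annihilator functionals have W phi = c e^{i beta z} *)
  (forall f : H -> R[i], cont_functional D domD f ->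
     (forall u, Cinf D domD u -> f (Vb u) = 0) ->
     exists c : R[i], forall z, (f (phi z^*))^* = c * cexp (ci * beta%:C * z)).
Proof.
move=> hip adm [dphi0 Dphi0] phi0n phiE HBE regE Enz unit surj tauh xbE Vb.
case: adm => [[subD [linD _]] [_ [_ [cV [_ DV]]]]].
have linV : linear_on setT V := cV.1.
have V0 : V 0 = 0 by apply: (@lin0 _ _ setT).
have DVb : forall u, domD (Vb u) /\ D (Vb u) = u.
  move=> u; rewrite /Vb addrC; split; first by apply: domDL => //; case: (DV u).
  by rewrite linD //; [rewrite Dphi0 scaler0 add0r; case: (DV u)|case: (DV u)].
have CVb : forall u, Cinf D domD u -> Cinf D domD (Vb u).
  move=> u /CinfP hu; apply/CinfP => -[|k]; first by case: (DVb u).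
  by rewrite iterSr (DVb u).2.
split; [split; [exact: CVb|split]|].
- split.
    exists 0; first exact: Cinf0.
    by rewrite /Vb V0 ip0l // scale0r addr0.
  move=> a _ _ [u hu <-] [v hv <-].
  exists (a *: u + v); first exact: CinfL.
  rewrite /Vb (@linV a u v I I) hip.1 scalerDl -scalerA.
  by rewrite scalerDr addrACA.
- move=> x hx happ.
  exists (D x); split; first exact: Cinf_D.
  have [Mv [Mv0 hMv]] := Vbound cV.
  set z := x - Vb (D x).
  have dx : domD x by apply: Cinf_dom hx.
  set K := 1 + Mv + `|xb| * `|phi0|.
  have K0 : 0 <= K by rewrite addr_ge0 ?mulr_ge0 // addr_ge0.
  have Kr : K = (complex.Re K)%:C by rewrite RRe_real // ger0_real.
  have k0 : 0 <= complex.Re K by rewrite -lecR -Kr.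
  have bnd : forall e : R, 0 < e -> e <= 1/4 -> hnorm z <= (4 * complex.Re K) * e.
    move=> e e0 e4.
    have [u [hu du]] := happ e e0.
    have [hw hw'] := dinf_small e0 e4 du.
    rewrite (DVb u).2 in hw'.
    set w := x - Vb u in hw; set w' := D x - u in hw'.
    have dVu : domD (Vb u) by case: (DVb u).
    have zeq : z = w - V w' - ip w' xb *: phi0.
      rewrite /w' (linB linV) // ipB // scalerBl /z /w /Vb.
      exact: zid.
    have nw : `|w| <= (4 * e)%:C by rewrite normHC lecR ltW.
    have nw' : `|w'| <= (4 * e)%:C by rewrite normHC lecR ltW.
    have : `|z| <= `|w| + Mv * `|w'| + `|w'| * `|xb| * `|phi0|.
      rewrite zeq; apply: le_trans (ler_normB _ _) _; apply: lerD.
        apply: le_trans (ler_normB _ _) _; rewrite lerD2l; exact: hMv.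
      rewrite normrZ ler_wpM2r //; exact: CS.
    move=> h1; rewrite -lecR -normHC; apply: le_trans h1 _.
    have -> : ((4 * complex.Re K * e)%:C : R[i]) = K * (4 * e)%:C.
      by rewrite {2}Kr -rmorphM; congr (_%:C); ring.
    set t := (4 * e)%:C in nw nw' *.
    rewrite /K !mulrDl mul1r; apply: lerD; first apply: lerD => //.
    - exact: ler_wpM2l.
    - rewrite -mulrA [_ * (4 * e)%:C]mulrC.
      by apply: ler_wpM2r; rewrite ?mulr_ge0.
  have hz : hnorm z <= 0.
    by apply: (small_zero (k := 4 * complex.Re K)) => //; rewrite mulr_ge0.
  have : `|z| = 0.
    by rewrite normHC; apply/eqP; rewrite eq_complex /= eqxx andbT eq_le hz hnorm_ge0.
  by move/normr0_eq0/eqP; rewrite subr_eq0 => /eqP.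
- move=> f [flin _] fann.
  have f0 : f 0 = 0.
    have := flin 1 0 0 (Cinf0 subD linD) (Cinf0 subD linD).
    rewrite scale1r addr0 mul1r => e.
    by apply: (addrI (f 0)); rewrite addr0 -e.
  have fZ : forall a y, Cinf D domD y -> f (a *: y) = a * f y.
    move=> a y hy; have := flin a y 0 hy (Cinf0 subD linD).
    by rewrite !addr0 f0 addr0.
  have Cphi0 : Cinf D domD phi0.
    apply/CinfP => -[|k] //; rewrite iterSr Dphi0.
    by move: (Cinf0 subD linD) => /CinfP.
  exists (f phi0)^* => z.
  have [->|z0] := eqVneq z 0.
    rewrite ?conjE conjc0; have := phiE 0; rewrite scale0r subr0 => ->.
    by rewrite mulr0 cexp0 mulr1.
  rewrite ?conjE.
  set l := z^*%C.
  have l0 : l != 0 by rewrite /l conjc_eq0.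
  set p := phi l.
  have hp := phiE l; rewrite -/p in hp.
  have pe : p = l *: V p + phi0 by rewrite -hp addrC subrK.
  have dVp := (DV p).1; have DVp := (DV p).2.
  have dp : domD p by rewrite pe; apply: domDL.
  have Dp : D p = l *: p by rewrite {1}pe linD // DVp Dphi0 addr0.
  have Cp : Cinf D domD p.
    apply/CinfP => k; suff -> : iter k D p = l ^+ k *: p by apply: (domDZ subD).
    elim: k => [|k IH]; first by rewrite expr0 scale1r.
    by rewrite iterS IH (DZ subD linD) // Dp scalerA -exprSr.
  have Vp : V p = l^-1 *: p - l^-1 *: phi0.
    have h : l *: V p = p - phi0 by rewrite -hp opprB addrC subrK.
    by rewrite -scalerBr -h scalerA mulVf // scale1r.
  have hVb : Vb p = l^-1 *: p + (ip p xb - l^-1) *: phi0.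
    by rewrite /Vb Vp scalerBl addrA addrAC.
  have fp : f p = (1 - l * ip p xb) * f phi0.
    have := fann p Cp; rewrite hVb flin //; last by apply: (CinfZ subD linD).
    rewrite fZ // => e0.
    apply/eqP; rewrite -subr_eq0.
    have <- : l * (l^-1 * f p + (ip p xb - l^-1) * f phi0) = 0 by rewrite e0 mulr0.
    apply/eqP; field; exact: l0.
  have g := xbE z; rewrite /gfourier (negbTE z0) in g.
  rewrite ?conjE -/l -/p in g.
  set E0 := cexp (ci * beta%:C * z) in g *.
  have c_eq : ip p xb = (1 - E0^*) / l.
    by rewrite (ipC hip) g fmorph_div rmorphB rmorph1.
  rewrite fp c_eq.
  have -> : 1 - l * ((1 - E0^*) / l) = E0^* by field.
  by rewrite ?conjE conjcM2 conjcK mulrC.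
Qed.
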